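(* Let $M,N\geq 2$ and let $\rho=\sum_{k=1}^n p_k|a^k\rangle\langle a^k|\otimes|b^k\rangle\langle b^k|$ be a classically correlated state on $\mathbb{C}^M\otimes\mathbb{C}^N$ (with $n>1$, $p_k\geq0$, $\sum_kp_k=1$, and unit vectors $|a^k\rangle\in\mathbb{C}^M$, $|b^k\rangle\in\mathbb{C}^N$). Then $$d_{\max}(\rho)\leq\sqrt{\frac{2(M-1)(N-1)}{MN}}.$$
   Context: For a state $\rho$ on $\mathbb{C}^M\otimes\mathbb{C}^N$ let $\rho_B=\mathrm{Tr}_A(\rho)$. A unitary $U^B$ on $\mathbb{C}^N$ is called cyclic for $\rho$ if $[\rho_B,U^B]=0$. Set $\rho_f=(I\otimes U^B)\rho(I\otimes U^{B\dagger})$ and define the Fu distance $d(\rho,U^B)=\frac{1}{\sqrt2}\|\rho-\rho_f\|_F$ (Frobenius norm $\|X\|_F=\sqrt{\mathrm{Tr}(X^\dagger X)}$). Define $d_{\max}(\rho)=\max\{d(\rho,U^B): U^B\text{ unitary},\ [\rho_B,U^B]=0\}$. *)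

(* Defs.v *)
From HB Require Import structures.
From mathcomp Require Import all_boot all_order all_algebra.
From mathcomp Require Export complex mxtens.
Set Implicit Arguments. Unset Strict Implicit. Unset Printing Implicit Defensive.
Import Order.TTheory GRing.Theory Num.Theory.
Local Open Scope ring_scope.

Definition adjmx (C : numClosedFieldType) (m n : nat) (A : 'M[C]_(m, n)) : 'M[C]_(n, m) :=
  (map_mx Num.conj A)^T.

Definition frob (C : numClosedFieldType) (n : nat) (X : 'M[C]_n) : C :=
  sqrtC (\tr (adjmx X *m X)).

(* partial trace over the first factor C^M of C^M (x) C^N;
   indices follow mxtens: (i,j) |-> mxtens_index (i,j) *)
Definition ptrA (C : numClosedFieldType) (M N : nat) (rho : 'M[C]_(M * N)) : 'M[C]_N :=
  \matrix_(j, l) \sum_(i < M) rho (mxtens_index (i, j)) (mxtens_index (i, l)).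

Definition unitary (C : numClosedFieldType) (n : nat) (U : 'M[C]_n) : Prop :=
  adjmx U *m U = 1%:M /\ U *m adjmx U = 1%:M.

Definition rho_f (C : numClosedFieldType) (M N : nat) (rho : 'M[C]_(M * N)) (U : 'M[C]_N)
  : 'M[C]_(M * N) :=
  ((1%:M : 'M[C]_M) *t U) *m rho *m ((1%:M : 'M[C]_M) *t adjmx U).

Definition fu_dist (C : numClosedFieldType) (M N : nat) (rho : 'M[C]_(M * N)) (U : 'M[C]_N) : C :=
  frob (rho - rho_f rho U) / sqrtC 2.

Definition cyclic_for (C : numClosedFieldType) (M N : nat) (rho : 'M[C]_(M * N)) (U : 'M[C]_N)
  : Prop := unitary U /\ ptrA rho *m U = U *m ptrA rho.

Definition proj (C : numClosedFieldType) (n : nat) (v : 'cV[C]_n) : 'M[C]_n := v *m adjmx v.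

Definition unit_vec (C : numClosedFieldType) (n : nat) (v : 'cV[C]_n) : Prop :=
  adjmx v *m v = 1%:M.

Definition cc_state (C : numClosedFieldType) (M N n : nat) (p : 'I_n -> C)
  (a : 'I_n -> 'cV[C]_M) (b : 'I_n -> 'cV[C]_N) : 'M[C]_(M * N) :=
  \sum_(k < n) p k *: (proj (a k) *t proj (b k)).

(* Main.v *)
Require Import Defs.
From HB Require Import structures.
From mathcomp Require Import all_boot all_order all_algebra.
From mathcomp Require Import complex mxtens.
From mathcomp Require Import ring.
Set Implicit Arguments. Unset Strict Implicit. Unset Printing Implicit Defensive.
Import Order.TTheory GRing.Theory Num.Theory.
Local Open Scope ring_scope.

Section Adj.
Variable C : numClosedFieldType.

Lemma adjmxE m n (A : 'M[C]_(m,n)) i j : adjmx A i j = (A j i)^*.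
Proof. by rewrite /adjmx !mxE. Qed.

Lemma adjmxM m n p (A : 'M[C]_(m,n)) (B : 'M[C]_(n,p)) :
  adjmx (A *m B) = adjmx B *m adjmx A.
Proof. by rewrite /adjmx map_mxM trmx_mul. Qed.

Lemma adjmxK m n (A : 'M[C]_(m,n)) : adjmx (adjmx A) = A.
Proof. by apply/matrixP=> i j; rewrite !adjmxE conjCK. Qed.

Lemma adjmxD m n (A B : 'M[C]_(m,n)) : adjmx (A + B) = adjmx A + adjmx B.
Proof. by apply/matrixP=> i j; rewrite /adjmx !mxE rmorphD. Qed.

Lemma adjmxB m n (A B : 'M[C]_(m,n)) : adjmx (A - B) = adjmx A - adjmx B.
Proof. by apply/matrixP=> i j; rewrite /adjmx !mxE rmorphB. Qed.

Lemma adjmxZ m n a (A : 'M[C]_(m,n)) : adjmx (a *: A) = a^* *: adjmx A.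
Proof. by apply/matrixP=> i j; rewrite /adjmx !mxE rmorphM. Qed.

Lemma adjmx_sum m n k (F : 'I_k -> 'M[C]_(m,n)) :
  adjmx (\sum_i F i) = \sum_i adjmx (F i).
Proof.
apply/matrixP=> i j; rewrite adjmxE !summxE rmorph_sum.
by apply: eq_bigr => l _; rewrite adjmxE.
Qed.

Lemma adjmx1 n : adjmx (1%:M : 'M[C]_n) = 1%:M.
Proof. by apply/matrixP=> i j; rewrite /adjmx !mxE eq_sym; case: eqP; rewrite /= ?rmorph1 ?rmorph0. Qed.

Lemma adjmx_tens m n p q (A : 'M[C]_(m,n)) (B : 'M[C]_(p,q)) :
  adjmx (A *t B) = adjmx A *t adjmx B.
Proof. by apply/matrixP=> i j; rewrite !mxE /= rmorphM. Qed.

End Adj.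
Section Dot.
Variable C : numClosedFieldType.

Definition dot n (u v : 'cV[C]_n) := (adjmx u *m v) 0 0.

Lemma dotE n (u v : 'cV[C]_n) : dot u v = \sum_i (u i 0)^* * v i 0.
Proof. by rewrite /dot mxE; apply: eq_bigr => i _; rewrite adjmxE. Qed.

Lemma dot_conj n (u v : 'cV[C]_n) : (dot u v)^* = dot v u.
Proof. by rewrite !dotE rmorph_sum; apply: eq_bigr => i _; rewrite rmorphM /= conjCK mulrC. Qed.

Lemma dot_ge0 n (u : 'cV[C]_n) : 0 <= dot u u.
Proof. by rewrite dotE; apply: sumr_ge0 => i _; rewrite mulrC mul_conjC_ge0. Qed.

Lemma dotBl n (u v w : 'cV[C]_n) : dot (u - v) w = dot u w - dot v w.
Proof. by rewrite !dotE -sumrB; apply: eq_bigr => i _; rewrite !mxE rmorphB mulrBl. Qed.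
Lemma dotBr n (u v w : 'cV[C]_n) : dot w (u - v) = dot w u - dot w v.
Proof. by rewrite !dotE -sumrB; apply: eq_bigr => i _; rewrite !mxE mulrBr. Qed.
Lemma dotZl n a (u w : 'cV[C]_n) : dot (a *: u) w = a^* * dot u w.
Proof. by rewrite !dotE mulr_sumr; apply: eq_bigr => i _; rewrite !mxE rmorphM mulrA. Qed.
Lemma dotZr n a (u w : 'cV[C]_n) : dot w (a *: u) = a * dot w u.
Proof. by rewrite !dotE mulr_sumr; apply: eq_bigr => i _; rewrite !mxE mulrCA. Qed.

Lemma unit_dot n (v : 'cV[C]_n) : unit_vec v -> dot v v = 1.
Proof. by rewrite /unit_vec /dot => ->; rewrite mxE. Qed.

Lemma dot_le1 n (v w : 'cV[C]_n) : unit_vec v -> unit_vec w ->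
  `|dot v w| ^+ 2 <= 1.
Proof.
move=> /unit_dot uv /unit_dot uw.
set s := dot w v.
have hs : dot v w = s^* by rewrite /s dot_conj.
have := dot_ge0 (v - s *: w).
rewrite !dotBl !dotBr !dotZl !dotZr uv uw hs -/s.
rewrite norm_conjC normCK.
have -> : 1 - s * s^* - (s^* * s - s^* * (s * 1)) = 1 - s * s^* by ring.
by rewrite subr_ge0.
Qed.

Lemma tr_proj n (v : 'cV[C]_n) : \tr (proj v) = dot v v.
Proof. by rewrite /proj mxtrace_mulC /dot /mxtrace big_ord1. Qed.

Lemma tr_projM n (v w : 'cV[C]_n) : \tr (proj v *m proj w) = `|dot v w| ^+ 2.
Proof.
rewrite /proj mulmxA mxtrace_mulC !mulmxA /mxtrace big_ord1.
rewrite -mulmxA mxE big_ord1 normCK dot_conj mulrC.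
by rewrite /dot.
Qed.

Lemma dotU n (U : 'M[C]_n) (v w : 'cV[C]_n) : unitary U ->
  dot (U *m v) (U *m w) = dot v w.
Proof. by case=> h _; rewrite /dot adjmxM !mulmxA -(mulmxA _ _ U) h mulmx1. Qed.

Lemma projU n (U : 'M[C]_n) (v : 'cV[C]_n) :
  proj (U *m v) = U *m proj v *m adjmx U.
Proof. by rewrite /proj adjmxM !mulmxA. Qed.

End Dot.
Section Tens.
Variable C : numClosedFieldType.

Lemma sum_tens_idx m n (F : 'I_(m * n) -> C) :
  \sum_(k < m * n) F k = \sum_(i < m) \sum_(j < n) F (mxtens_index (i, j)).
Proof.
rewrite (reindex (@mxtens_index m n)) /=; last first.
  by exists (@mxtens_unindex m n) => x _; [apply: mxtens_indexK | apply: mxtens_unindexK].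
by rewrite pair_bigA /=; apply: eq_bigr => -[i j].
Qed.

Lemma tr_tens m n (A : 'M[C]_m) (B : 'M[C]_n) : \tr (A *t B) = \tr A * \tr B.
Proof.
rewrite /mxtrace sum_tens_idx mulr_suml; apply: eq_bigr => i _.
rewrite mulr_sumr; apply: eq_bigr => j _; exact: tensmxE.
Qed.

Lemma tensmxBr m n p q (A : 'M[C]_(m,n)) (B D : 'M[C]_(p,q)) :
  A *t (B - D) = A *t B - A *t D.
Proof. by apply/matrixP=> i j; rewrite !mxE mulrBr. Qed.

Lemma tensmxZr m n p q a (A : 'M[C]_(m,n)) (B : 'M[C]_(p,q)) :
  A *t (a *: B) = a *: (A *t B).
Proof. by apply/matrixP=> i j; rewrite !mxE mulrCA. Qed.

Lemma ptrA_tens m n (A : 'M[C]_m) (B : 'M[C]_n) : ptrA (A *t B) = \tr A *: B.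
Proof.
apply/matrixP=> j l; rewrite !mxE /mxtrace mulr_suml; apply: eq_bigr => i _.
exact: tensmxE.
Qed.

Lemma ptrA_lin m n k (p : 'I_k -> C) (X : 'I_k -> 'M[C]_(m * n)) :
  ptrA (\sum_i p i *: X i) = \sum_i p i *: ptrA (X i).
Proof.
apply/matrixP=> j l; rewrite !mxE summxE.
under eq_bigr do rewrite summxE.
rewrite exchange_big; apply: eq_bigr => i _.
rewrite [RHS]mxE [X in _ * X]mxE mulr_sumr; apply: eq_bigr => r _; by rewrite mxE.
Qed.

Lemma tr_sumZ n k (p : 'I_k -> C) (E F : 'I_k -> 'M[C]_n) :
  \tr ((\sum_i p i *: E i) *m (\sum_j p j *: F j)) =
  \sum_i \sum_j p i * p j * \tr (E i *m F j).
Proof.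
rewrite mulmx_suml raddf_sum; apply: eq_bigr => i _.
rewrite mulmx_sumr raddf_sum; apply: eq_bigr => j _.
by rewrite -scalemxAl -scalemxAr scalerA; apply: mxtraceZ.
Qed.

Lemma tr_sum_tens m n k (p : 'I_k -> C) (A : 'I_k -> 'M[C]_m) (E F : 'I_k -> 'M[C]_n) :
  \tr ((\sum_i p i *: (A i *t E i)) *m (\sum_j p j *: (A j *t F j))) =
  \sum_i \sum_j p i * p j * (\tr (A i *m A j) * \tr (E i *m F j)).
Proof.
rewrite tr_sumZ; apply: eq_bigr => i _; apply: eq_bigr => j _.
by rewrite tensmx_mul tr_tens.
Qed.

End Tens.
Section Psd.
Variable C : numClosedFieldType.

Lemma tr_adj_ge0 n (X : 'M[C]_n) : 0 <= \tr (adjmx X *m X).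
Proof.
rewrite /mxtrace; apply: sumr_ge0 => i _; rewrite mxE.
by apply: sumr_ge0 => j _; rewrite adjmxE mulrC mul_conjC_ge0.
Qed.

Lemma tr_sq_herm n (S : 'M[C]_n) : (0 < n)%N -> adjmx S = S -> \tr S = 1 ->
  n%:R^-1 <= \tr (S *m S).
Proof.
move=> n0 hS trS.
have e : \tr (S *m S) = \sum_i \sum_j `|S i j| ^+ 2.
  rewrite /mxtrace; apply: eq_bigr => i _; rewrite mxE; apply: eq_bigr => j _.
  by rewrite normCK -(adjmxE S j i) hS.
rewrite e.
apply: le_trans (_ : n%:R^-1 <= \sum_i `|S i i| ^+ 2) _; last first.
  apply: ler_sum => i _; rewrite (bigD1 i) //= lerDl.
  by apply: sumr_ge0 => j _; rewrite exprn_ge0.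
set w := fun i => `|S i i|.
have hw : 1 <= \sum_i w i.
  by rewrite -(normr1 C) -trS /mxtrace; apply: ler_norm_sum.
set c : C := n%:R^-1.
have hc : n%:R * c = 1 by rewrite /c mulfV // pnatr_eq0 -lt0n.
have h0 : 0 <= \sum_i (w i - c) ^+ 2.
  apply: sumr_ge0 => i _; apply: real_exprn_even_ge0 => //.
  by rewrite realB // ?normr_real // /c realV realn.
have ex : \sum_i (w i - c) ^+ 2 = \sum_i w i ^+ 2 - (c *+ 2) * \sum_i w i + c.
  have -> : \sum_i (w i - c) ^+ 2 = \sum_i (w i ^+ 2 - (c *+ 2) * w i + c ^+ 2).
    by apply: eq_bigr => i _; ring.
  rewrite big_split /= sumrB -mulr_sumr sumr_const card_ord.
  rewrite -[c ^+ 2 *+ n]mulr_natl.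
  have -> : n%:R * c ^+ 2 = (n%:R * c) * c by ring.
  rewrite hc mul1r; congr (_ - _ + _); by rewrite mulr_natl.
rewrite ex in h0.
have h1 : c *+ 2 * 1 <= c *+ 2 * \sum_i w i.
  by apply: ler_wpM2l => //; rewrite mulrn_wge0 // invr_ge0 ler0n.
set a := \sum_i w i ^+ 2 in h0 *.
set b := \sum_i w i in h0 h1 *.
have -> : a = (a - c *+ 2 * b + c) + (c *+ 2 * b - c *+ 2 * 1) + c by ring.
rewrite -{1}[c]add0r; apply: lerD => //; apply: addr_ge0 => //.
by rewrite subr_ge0.
Qed.
End Psd.
Section Fin.
Variable C : numClosedFieldType.

Lemma bound_ge (M N : nat) : (2 <= M)%N -> (2 <= N)%N ->
  1 - N%:R^-1 <= ((2 * (M - 1)%:R * (N - 1)%:R) / (M%:R * N%:R) : C).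
Proof.
move=> hM hN.
rewrite !natrB ?(leq_trans _ hM) ?(leq_trans _ hN) //.
set m : C := M%:R; set k : C := N%:R.
have m0 : m != 0 by rewrite /m pnatr_eq0 -lt0n (leq_trans _ hM).
have k0 : k != 0 by rewrite /k pnatr_eq0 -lt0n (leq_trans _ hN).
rewrite -subr_ge0.
have -> : 2 * (m - 1) * (k - 1) / (m * k) - (1 - k^-1) = (m - 2) * (k - 1) / (m * k).
  by field; rewrite k0 m0.
apply: divr_ge0; last by rewrite mulr_ge0 ?ler0n.
apply: mulr_ge0; rewrite subr_ge0.
  by rewrite /m ler_nat.
by rewrite /k ler1n (leq_trans _ hN).
Qed.

Lemma final_bound (M N : nat) (t : C) : (2 <= M)%N -> (2 <= N)%N ->
  0 <= t -> t <= 2 - 2 * N%:R^-1 ->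
  sqrtC t / sqrtC 2 <= sqrtC ((2 * (M - 1)%:R * (N - 1)%:R) / (M%:R * N%:R)).
Proof.
move=> hM hN t0 ht.
set B := (2 * (M - 1)%:R * (N - 1)%:R / (M%:R * N%:R) : C).
have hB := bound_ge hM hN. rewrite -/B in hB.
have N1 : 0 <= 1 - (N%:R : C)^-1.
  rewrite subr_ge0 invf_le1 ?ltr0n ?(leq_trans _ hN) //.
  by rewrite ler1n (leq_trans _ hN).
have B0 : 0 <= B := le_trans N1 hB.
have s2 : 0 < sqrtC (2 : C) by rewrite sqrtC_gt0 ltr0n.
rewrite ler_pdivrMr // -sqrtCM ?nnegrE ?ler0n //.
rewrite ler_sqrtC ?nnegrE ?mulr_ge0 ?invr_ge0 ?ler0n //.
apply: le_trans ht _.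
have -> : 2 - 2 * (N%:R : C)^-1 = (1 - N%:R^-1) * 2 by ring.
apply: ler_wpM2r; rewrite ?ler0n //.
by rewrite mulr_ge0 ?ler0n.
Qed.
End Fin.

Section Main.
Variable C : numClosedFieldType.

Lemma adj_proj n (v : 'cV[C]_n) : adjmx (proj v) = proj v.
Proof. by rewrite /proj adjmxM adjmxK. Qed.

Lemma adj_sum_tens m n k (p : 'I_k -> C) (A : 'I_k -> 'cV[C]_m) (E : 'I_k -> 'cV[C]_n) :
  (forall i, 0 <= p i) ->
  adjmx (\sum_i p i *: (proj (A i) *t proj (E i))) = \sum_i p i *: (proj (A i) *t proj (E i)).
Proof.
move=> hp; rewrite adjmx_sum; apply: eq_bigr => i _.
by rewrite adjmxZ adjmx_tens !adj_proj geC0_conj.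
Qed.

Lemma term_le (c y y' x x' : C) : 0 <= c -> c <= 1 -> y <= 1 -> y' <= 1 ->
  x <= 1 -> x' <= 1 -> c * (y + y' - x - x') <= 2 - x - x'.
Proof.
move=> c0 c1 y1 y'1 x1 x'1.
have s0 : 0 <= 2 - x - x'.
  have -> : 2 - x - x' = (1 - x) + (1 - x') by ring.
  by apply: addr_ge0; rewrite subr_ge0.
have st : 0 <= (2 - x - x') - (y + y' - x - x').
  have -> : (2 - x - x') - (y + y' - x - x') = (1 - y) + (1 - y') by ring.
  by apply: addr_ge0; rewrite subr_ge0.
rewrite -subr_ge0.
have -> : 2 - x - x' - c * (y + y' - x - x') =
  (1 - c) * (2 - x - x') + c * ((2 - x - x') - (y + y' - x - x')) by ring.
by apply: addr_ge0; apply: mulr_ge0; rewrite // subr_ge0.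
Qed.

Lemma tr_diff_sq n (P Q : 'M[C]_n) :
  \tr ((P - Q) *m (P - Q)) = \tr (P *m P) - \tr (P *m Q) - (\tr (Q *m P) - \tr (Q *m Q)).
Proof. by rewrite mulmxBl !mulmxBr !raddfB. Qed.

Lemma key_calc m n k (p : 'I_k -> C) (a : 'I_k -> 'cV[C]_m) (b b' : 'I_k -> 'cV[C]_n) :
  \tr ((\sum_i p i *: (proj (a i) *t proj (b i)) - \sum_i p i *: (proj (a i) *t proj (b' i))) *m
       (\sum_i p i *: (proj (a i) *t proj (b i)) - \sum_i p i *: (proj (a i) *t proj (b' i)))) =
  \sum_i \sum_j p i * p j * (`|dot (a i) (a j)| ^+ 2 *
     (`|dot (b i) (b j)| ^+ 2 + `|dot (b' i) (b' j)| ^+ 2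
      - `|dot (b i) (b' j)| ^+ 2 - `|dot (b' i) (b j)| ^+ 2)).
Proof.
rewrite tr_diff_sq !tr_sum_tens.
rewrite -!sumrB; apply: eq_bigr => i _.
rewrite -!sumrB; apply: eq_bigr => j _.
rewrite !tr_projM; ring.
Qed.

Lemma ht_gen m n k (p : 'I_k -> C) (a : 'I_k -> 'cV[C]_m) (b b' : 'I_k -> 'cV[C]_n) :
  (forall i, 0 <= p i) -> (forall i, unit_vec (a i)) -> (forall i, unit_vec (b i)) ->
  (forall i, unit_vec (b' i)) ->
  \sum_i \sum_j p i * p j * (`|dot (a i) (a j)| ^+ 2 *
     (`|dot (b i) (b j)| ^+ 2 + `|dot (b' i) (b' j)| ^+ 2
      - `|dot (b i) (b' j)| ^+ 2 - `|dot (b' i) (b j)| ^+ 2)) <=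
  \sum_i \sum_j p i * p j * 2 - \sum_i \sum_j p i * p j * `|dot (b i) (b' j)| ^+ 2
   - \sum_i \sum_j p i * p j * `|dot (b' i) (b j)| ^+ 2.
Proof.
move=> hp ha hb hb'.
rewrite -!sumrB; apply: ler_sum => i _; rewrite -!sumrB; apply: ler_sum => j _.
have -> : p i * p j * 2 - p i * p j * `|dot (b i) (b' j)| ^+ 2 -
   p i * p j * `|dot (b' i) (b j)| ^+ 2 = p i * p j *
   (2 - `|dot (b i) (b' j)| ^+ 2 - `|dot (b' i) (b j)| ^+ 2) by ring.
apply: ler_wpM2l; first by apply: mulr_ge0.
by apply: term_le; rewrite ?exprn_ge0 ?dot_le1.
Qed.

End Main.

Unset Implicit Arguments.

Theorem mainTheorem8 (R : rcfType) (M N n : nat)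
  (p : 'I_n -> R[i]) (a : 'I_n -> 'cV[R[i]]_M) (b : 'I_n -> 'cV[R[i]]_N) :
  (2 <= M)%N -> (2 <= N)%N -> (1 < n)%N ->
  (forall k, 0 <= p k) -> \sum_(k < n) p k = 1 ->
  (forall k, unit_vec (a k)) -> (forall k, unit_vec (b k)) ->
  forall U : 'M[R[i]]_N, cyclic_for (cc_state p a b) U ->
  fu_dist (cc_state p a b) U <=
    sqrtC ((2 * (M - 1)%:R * (N - 1)%:R) / (M%:R * N%:R)).
Proof.
move=> hM hN _ hp hsum ha hb U [hU hcomm].
set rho := cc_state p a b.
pose b' k := U *m b k.
have hb' k : unit_vec (b' k).
  by rewrite /unit_vec /b' adjmxM mulmxA -(mulmxA _ (adjmx U)) hU.1 mulmx1; apply: hb.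
have hrf : rho_f rho U = \sum_k p k *: (proj (a k) *t proj (b' k)).
  rewrite /rho_f /rho /cc_state mulmx_sumr mulmx_suml; apply: eq_bigr => k _.
  rewrite -scalemxAr -scalemxAl tensmx_mul tensmx_mul mul1mx mulmx1.
  by rewrite /b' projU.
have hrho : rho = \sum_k p k *: (proj (a k) *t proj (b k)) by [].
set S := ptrA rho.
have hS : S = \sum_k p k *: proj (b k).
  rewrite /S hrho ptrA_lin; apply: eq_bigr => k _.
  by rewrite ptrA_tens tr_proj unit_dot // scale1r.
have hS' : \sum_k p k *: proj (b' k) = S.
  transitivity (U *m S *m adjmx U).
    rewrite hS mulmx_sumr mulmx_suml; apply: eq_bigr => k _.
    by rewrite -scalemxAr -scalemxAl /b' projU.
  by rewrite -hcomm -mulmxA hU.2 mulmx1.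
have SH : adjmx S = S.
  rewrite hS adjmx_sum; apply: eq_bigr => k _.
  by rewrite adjmxZ adj_proj geC0_conj.
have trS : \tr S = 1.
  rewrite hS raddf_sum -hsum; apply: eq_bigr => k _.
  by rewrite [LHS]mxtraceZ tr_proj unit_dot // mulr1.
have trSS := tr_sq_herm (leq_trans _ hN) SH trS.
set X := rho - rho_f rho U.
have XH : adjmx X = X.
  by rewrite /X adjmxB hrf !adj_sum_tens.
set t := \tr (adjmx X *m X).
have t0 : 0 <= t := tr_adj_ge0 X.
clearbody rho S.
have L : t = \sum_k \sum_l p k * p l * (`|dot (a k) (a l)| ^+ 2 *
     (`|dot (b k) (b l)| ^+ 2 + `|dot (b' k) (b' l)| ^+ 2
      - `|dot (b k) (b' l)| ^+ 2 - `|dot (b' k) (b l)| ^+ 2)).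
  rewrite /t XH /X hrf.
  rewrite hrho.
  exact: (key_calc p a b b').
have e1 : \tr (S *m S) = \sum_k \sum_l p k * p l * `|dot (b k) (b' l)| ^+ 2.
  rewrite -{2}hS' {1}hS tr_sumZ; apply: eq_bigr => k _; apply: eq_bigr => l _.
  by rewrite tr_projM.
have e2 : \tr (S *m S) = \sum_k \sum_l p k * p l * `|dot (b' k) (b l)| ^+ 2.
  rewrite -{1}hS' {1}hS tr_sumZ; apply: eq_bigr => k _; apply: eq_bigr => l _.
  by rewrite tr_projM.
have e3 : 2 = \sum_k \sum_l p k * p l * 2.
  transitivity ((\sum_k p k) * (\sum_l p l) * 2); first by rewrite hsum !mul1r.
  rewrite mulr_suml mulr_suml; apply: eq_bigr => k _.
  by rewrite mulr_sumr mulr_suml; apply: eq_bigr => l _.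
have ht : t <= 2 - \tr (S *m S) - \tr (S *m S).
  rewrite [X in _ - X]e2 e1 e3 L.
  exact: ht_gen.
apply: final_bound => //.
apply: le_trans ht _.
have -> : 2 - \tr (S *m S) - \tr (S *m S) = 2 - 2 * \tr (S *m S) by ring.
rewrite lerB // ler_pM2l ?ltr0n //.
exact: trSS.
Qed.
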